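(* Let $G=(V,P,d)$ be a reversible metric Markov chain with $d$ the combinatorial distance and $m(V)=1$. Then \[ h\le\frac{57\,\mathrm{Deg}_{\max}}{\operatorname{diam}_{\operatorname{obs}}^{(1/8)}}. \]
   Context: $V$ finite; $P:V\times V\to[0,\infty)$ with symmetric support, connected; $x\sim y$ iff $x\ne y$, $P(x,y)>0$; $d(x,y)$ is the minimal number of edges on a path from $x$ to $y$; $m$ the probability with $m(x)P(x,y)=m(y)P(y,x)$. $|\partial W|=\sum_{x\in W,y\notin W}P(x,y)m(x)d(x,y)$; $h=\inf\{|\partial W|/m(W):W\neq\emptyset,\ m(W)\le\frac12\}$. $\mathrm{Deg}_{\max}=\max_x\sum_{y\ne x}P(x,y)$. $\operatorname{cl}(B)=B\cup\{x:x\sim y\text{ for some }y\in B\}$; $\operatorname{diam}_{\operatorname{obs}}^{(\varepsilon)}=\sup\{d(A,B):m(A)\ge\varepsilon,\ m(\operatorname{cl}(B))\ge\varepsilon\}$ with $d(A,B)=\min_{a\in A,b\in B}d(a,b)$. *)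

(* Defs.v *)
From HB Require Import structures.
From mathcomp Require Import all_boot all_order all_algebra.
From mathcomp Require Import all_classical all_reals ereal.
Set Implicit Arguments. Unset Strict Implicit. Unset Printing Implicit Defensive.
Import Order.TTheory GRing.Theory Num.Theory.
Local Open Scope ring_scope.

Section MetricMarkov.
Variables (R : realType) (V : finType) (P : V -> V -> R).

Definition adj : rel V := fun x y => (x != y) && (0 < P x y).

Fixpoint within (n : nat) (x y : V) : bool :=
  match n with
  | 0 => x == y
  | n'.+1 => within n' x y || [exists z, within n' x z && adj z y]
  end.

(* combinatorial distance: minimal number of edges on a path from x to y
   (in a connected graph it is < #|V|; the default #|V| is never used then) *)
Definition dist (x y : V) : nat :=
  \big[minn/#|V|]_(n < #|V| | within n x y) n.

(* d(A,B) = min_{a in A, b in B} d(a,b)  (only used for nonempty A, B) *)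
Definition setdist (A B : {set V}) : nat :=
  \big[minn/#|V|]_(a in A) \big[minn/#|V|]_(b in B) dist a b.

Definition mass (m : V -> R) (W : {set V}) : R := \sum_(x in W) m x.

Definition bnd (m : V -> R) (W : {set V}) : R :=
  \sum_(x in W) \sum_(y in ~: W) P x y * m x * (dist x y)%:R.

Definition cheeger (m : V -> R) : \bar R :=
  ereal_inf [set ((bnd m W / mass m W)%:E) | W in
              [set W : {set V} | W != finset.set0 /\ mass m W <= 2^-1]].

Definition degmax : R := \big[Num.max/0]_x \sum_(y | y != x) P x y.

Definition cl (B : {set V}) : {set V} :=
  B :|: [set x | [exists y in B, adj x y]].

(* observable diameter: sup{ d(A,B) : m(A) >= eps, m(cl B) >= eps }
   (a finite, nonempty family of naturals, so the sup is a max) *)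
Definition diam_obs (m : V -> R) (eps : R) : nat :=
  \max_(AB : {set V} * {set V} | (eps <= mass m AB.1) && (eps <= mass m (cl AB.2)))
     setdist AB.1 AB.2.

End MetricMarkov.

(* Main.v *)
Require Import Defs.
From HB Require Import structures.
From mathcomp Require Import all_boot all_order all_algebra.
From mathcomp Require Import all_classical all_reals ereal.
From mathcomp Require Import ring lra zify.
Import Order.TTheory GRing.Theory Num.Theory.
Local Open Scope ring_scope.
Local Notation dist := Defs.dist.
Local Notation within := Defs.within.
Local Notation adj := Defs.adj.
Local Notation cl := Defs.cl.
Local Notation mass := Defs.mass.
Local Notation bnd := Defs.bnd.
Local Notation setdist := Defs.setdist.

Lemma bigmin_le (I : eqType) (r : seq I) (Pr : pred I) (F : I -> nat) d j :
  j \in r -> Pr j -> (\big[minn/d]_(i <- r | Pr i) F i <= F j)%N.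
Proof.
elim: r => // a r IH; rewrite inE big_cons => /orP [/eqP <- | hj] hp.
- by rewrite hp geq_min leqnn.
- by case: ifP => _; [rewrite geq_min IH ?orbT | apply: IH].
Qed.

Section Proofs.
Variables (R : realType) (V : finType) (P : V -> V -> R) (m : V -> R).
Hypotheses (HV : (1 < #|V|)%N) (HP0 : forall x y, 0 <= P x y)
  (Hsupp : forall x y, (0 < P x y) = (0 < P y x))
  (Hconn : forall x y, connect (adj P) x y)
  (Hm0 : forall x, 0 <= m x) (Hm1 : \sum_x m x = 1)
  (Hrev : forall x y, m x * P x y = m y * P y x).

Lemma dist_le_card x y : (dist P x y <= #|V|)%N.
Proof.
rewrite /dist; apply: (big_ind (fun n => n <= #|V|)%N) => //.
- by move=> a b ha hb; rewrite geq_min ha.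
- by move=> i _; apply: ltnW.
Qed.

Lemma dist_within x y n : (n < #|V|)%N -> within P n x y -> (dist P x y <= n)%N.
Proof. by move=> hn hw; rewrite /dist; apply: (@bigmin_le _ _ _ _ _ (Ordinal hn)) => //; rewrite mem_index_enum. Qed.

Lemma dist_ge1 x y : x != y -> (1 <= dist P x y)%N.
Proof.
move=> hxy; rewrite /dist; apply: (big_ind (fun n => 1 <= n)%N).
- exact: ltnW.
- by move=> a b ha hb; rewrite leq_min ha hb.
- by move=> [[|n] hn] //=; rewrite (negbTE hxy).
Qed.

Lemma dist_refl x : dist P x x = 0%N.
Proof. by apply/eqP; rewrite -leqn0; apply: dist_within => //=; apply: ltnW. Qed.

Lemma dist_adj x y : adj P x y -> dist P x y = 1%N.
Proof.
move=> hxy; apply/anti_leq/andP; split; last by apply: dist_ge1; case/andP: hxy.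
apply: dist_within => //=; apply/orP; right; apply/existsP; exists x; by rewrite eqxx hxy.
Qed.

Lemma dist_step a x y : adj P x y -> (dist P a y <= (dist P a x).+1)%N.
Proof.
move=> hxy; rewrite [dist P a x]/dist.
apply: (big_ind (fun k => dist P a y <= k.+1)%N).
- exact: leqW (dist_le_card _ _).
- by move=> u v hu hv; rewrite -minnSS leq_min hu hv.
- move=> i hi; case: (ltnP i.+1 #|V|) => h.
  + apply: dist_within => //=; apply/orP; right; apply/existsP; exists x; by rewrite hi hxy.
  + exact: leq_trans (dist_le_card _ _) h.
Qed.

Definition fd (A : {set V}) x := \big[minn/#|V|]_(a in A) dist P a x.

Lemma fd_le_card A x : (fd A x <= #|V|)%N.
Proof.
rewrite /fd; apply: (big_ind (fun n => n <= #|V|)%N) => //.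
- by move=> a b ha hb; rewrite geq_min ha.
- by move=> i _; apply: dist_le_card.
Qed.

Lemma fd_le (A : {set V}) a x : a \in A -> (fd A x <= dist P a x)%N.
Proof. by move=> ha; rewrite /fd; apply: bigmin_le => //; rewrite mem_index_enum. Qed.

Lemma fd_step (A : {set V}) x y : adj P x y -> (fd A y <= (fd A x).+1)%N.
Proof.
move=> hxy; rewrite [fd A x]/fd.
apply: (big_ind (fun k => fd A y <= k.+1)%N).
- exact: leqW (fd_le_card _ _).
- by move=> u v hu hv; rewrite -minnSS leq_min hu hv.
- by move=> a ha; exact: (leq_trans (fd_le _ _ y ha) (dist_step a _ _ hxy)).
Qed.

Lemma fd_in (A : {set V}) a : a \in A -> fd A a = 0%N.
Proof. by move=> ha; apply/eqP; rewrite -leqn0 -(dist_refl a) fd_le. Qed.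

Lemma setdist_le_fd (A B : {set V}) b : b \in B -> (setdist P A B <= fd A b)%N.
Proof.
move=> hb; rewrite /setdist /fd.
apply: (big_ind2 (fun u v => u <= v)%N) => //.
- by move=> a1 a2 b1 b2 h1 h2; rewrite leq_min !geq_min h1 h2 orbT.
- by move=> a _; apply: bigmin_le => //; rewrite mem_index_enum.
Qed.

Lemma cl_fd (A B : {set V}) z : z \in cl P B -> (setdist P A B <= (fd A z).+1)%N.
Proof.
rewrite /cl !inE => /orP [hz | ].
- exact: leqW (setdist_le_fd A _ _ hz).
- move=> /existsP [y /andP [hy hzy]].
  exact: leq_trans (setdist_le_fd A _ _ hy) (fd_step A _ _ hzy).
Qed.


Lemma massT : mass m (finset.setT : {set V}) = 1.
Proof. by rewrite /mass -Hm1; apply: eq_bigl => x; rewrite inE. Qed.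

Lemma mass_ge0 W : 0 <= mass m W.
Proof. by apply: sumr_ge0 => x _. Qed.

Lemma massC W : mass m (~: W) = 1 - mass m W.
Proof.
apply/eqP; rewrite eq_sym subr_eq -Hm1 /mass (bigID (mem W)) /= addrC.
apply/eqP; congr (_ + _); apply: eq_bigl => x; by rewrite !inE.
Qed.

Lemma mass_sub (A W : {set V}) : A \subset W -> mass m A <= mass m W.
Proof.
move=> /fintype.subsetP hs; rewrite /mass [X in X <= _]big_mkcond [X in _ <= X]big_mkcond.
apply: ler_sum => x _; case: ifP => hx; first by rewrite hs.
by case: ifP.
Qed.

Lemma bndE W : bnd P m W = \sum_(x in W) \sum_(y in ~: W) m x * P x y.
Proof.
apply: eq_bigr => x hx; apply: eq_bigr => y hy.
have hxy : x != y by apply: contraTneq hy => <-; rewrite inE hx.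
have [hp|hp] := boolP (0 < P x y).
- by rewrite dist_adj ?mulr1n ?mulr1 1?mulrC //; apply/andP.
- have -> : P x y = 0 by apply/eqP; rewrite eq_le HP0 andbT leNgt.
  by rewrite !mul0r mulr0.
Qed.

Lemma bndC W : bnd P m (~: W) = bnd P m W.
Proof.
rewrite !bndE finset.setCK exchange_big /=; apply: eq_bigr => y _; apply: eq_bigr => x _.
by rewrite Hrev.
Qed.

Lemma bnd_ge0 W : 0 <= bnd P m W.
Proof. by rewrite bndE; apply: sumr_ge0 => x _; apply: sumr_ge0 => y _; apply: mulr_ge0. Qed.

Lemma cheeger_le W : W != finset.set0 -> mass m W <= 2^-1 ->
  (cheeger P m <= (bnd P m W / mass m W)%:E)%E.
Proof. by move=> h1 h2; apply: ereal_inf_lbound; exists W. Qed.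

Lemma mass_pos_ne0 W : 0 < mass m W -> W != finset.set0.
Proof. by apply: contraTneq => ->; rewrite /mass big_set0 ltxx. Qed.

Lemma cheeger_le8 W : 8^-1 <= mass m W -> mass m W <= 1 - 8^-1 ->
  (cheeger P m <= (8 * bnd P m W)%:E)%E.
Proof.
move=> h1 h2.
have key : forall U, 8^-1 <= mass m U -> mass m U <= 2^-1 ->
    (cheeger P m <= (8 * bnd P m U)%:E)%E.
  move=> U u1 u2; have hb := bnd_ge0 U.
  have hpos : 0 < mass m U by apply: lt_le_trans u1; rewrite invr_gt0.
  apply: le_trans (cheeger_le U (mass_pos_ne0 U hpos) u2) _.
  rewrite lee_fin ler_pdivrMr //.
  have : 1 <= 8 * mass m U by lra.
  nra.
case: (lerP (mass m W) 2^-1) => hW; first exact: key.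
rewrite -bndC; apply: key; rewrite massC; lra.
Qed.

Lemma m_pos x : 0 < m x.
Proof.
rewrite lt_def Hm0 andbT; apply/negP => /eqP hx0.
have hall : forall y, m y = 0.
  move=> y; have /connectP [p hp ->] := Hconn x y.
  elim: p x hx0 hp => [|z p IH] x' hx0 //= /andP [hxz hp].
  apply: (IH z) => //.
  case/andP: hxz => _ hpos.
  have := Hrev x' z; rewrite hx0 mul0r => /esym/eqP; rewrite mulf_eq0 => /orP [/eqP //|/eqP hz].
  by move: hpos; rewrite Hsupp hz ltxx.
have : \sum_x m x = 0 by apply: big1 => y _; exact: hall y.
by rewrite Hm1 => /eqP; rewrite oner_eq0.
Qed.

Definition deg x := \sum_(y | y != x) P x y.

Lemma deg_le x : deg x <= degmax P.
Proof. exact: (le_bigmax _ (fun x => \sum_(y | y != x) P x y) x). Qed.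

Lemma degmax_ge0 : 0 <= degmax P.
Proof. exact: bigmax_ge_id. Qed.

Lemma cheeger_deg : (cheeger P m <= (degmax P)%:E)%E.
Proof.
have [x [y [_ _ hxy]]] := card_gt1P HV.
have hsum : m x + m y <= 1.
  rewrite -Hm1 (bigD1 x) //= (bigD1 y) /=; last by rewrite eq_sym.
  by rewrite addrA lerDl sumr_ge0.
have [z hz] : exists z, m z <= 2^-1.
  by case: (lerP (m x) 2^-1) => h; [exists x | exists y; have := Hm0 x; lra].
have hz0 := m_pos z.
have hne : (finset.set1 z) != finset.set0 by apply/set0Pn; exists z; rewrite inE.
apply: le_trans (cheeger_le (finset.set1 z) hne _) _; first by rewrite /mass big_set1.
rewrite lee_fin /mass big_set1 bndE big_set1.
rewrite -mulr_sumr mulrC mulKf ?lt0r_neq0 //.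
rewrite (eq_bigl (fun y => y != z)); first exact: deg_le.
by move=> w; rewrite !inE.
Qed.

Lemma nbr x : exists y, adj P x y.
Proof.
have [a [b [_ _ hab]]] := card_gt1P HV.
have [y hy] : exists y, y != x.
  by case: (eqVneq a x) => [<-|h]; [exists b; rewrite eq_sym | exists a].
have /connectP [p hp hl] := Hconn x y.
case: p hp hl => [|z p] /=; first by move=> _ hyx; rewrite hyx eqxx in hy.
by case/andP => h _ _; exists z.
Qed.

Lemma setdist_ge1 (A : {set V}) : (1 <= setdist P A (~: A))%N.
Proof.
rewrite /setdist; apply: (big_ind (fun n => 1 <= n)%N).
- exact: ltnW.
- by move=> u v hu hv; rewrite leq_min hu hv.
- move=> a ha; apply: (big_ind (fun n => 1 <= n)%N).
  + exact: ltnW.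
  + by move=> u v hu hv; rewrite leq_min hu hv.
  + move=> b hb; apply: dist_ge1; apply: contraTneq hb => <-; by rewrite inE ha.
Qed.

Lemma clT : cl P (finset.setT : {set V}) = finset.setT.
Proof. by apply/finset.setP => x; rewrite /cl !inE. Qed.

Lemma diam_ge1 : (1 <= diam_obs P m 8^-1)%N.
Proof.
pose Q : pred {set V} := fun A => 8^-1 <= mass m A.
have hQT : Q finset.setT by rewrite /Q massT; lra.
case: (arg_minnP (fun A : {set V} => #|A|) hQT) => A hA hmin.
apply: leq_trans (setdist_ge1 A) _.
apply: (@leq_bigmax_cond _ _ (fun AB => setdist P AB.1 AB.2) (A, ~: A)) => /=.
apply/andP; split; first exact: hA.
have hApos : 0 < mass m A by apply: lt_le_trans hA; rewrite invr_gt0.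
have /set0Pn [a ha] := mass_pos_ne0 A hApos.
case: (leqP #|A| 1) => hc.
- have hA1 : finset.set1 a = A by apply/eqP; rewrite eqEcard finset.sub1set ha cards1 hc.
  have [y hy] := nbr a.
  have -> : cl P (~: A) = finset.setT.
    apply/finset.setP => x; rewrite /cl -hA1 !inE.
    case: (eqVneq x a) => [->|hxa] //=.
    apply/existsP; exists y; rewrite hy andbT.
    by rewrite !inE eq_sym; case/andP: hy.
  rewrite massT; lra.
- have h1 : mass m (finset.set1 a) < 8^-1.
    rewrite ltNge; apply/negP => hq; have := hmin _ hq; rewrite cards1; lia.
  have h2 : mass m (A :\ a) < 8^-1.
    rewrite ltNge; apply/negP => hq; have := hmin _ hq; have := cardsD1 a A; rewrite ha; lia.
  have hsplit : mass m A = m a + mass m (A :\ a) by rewrite /mass (big_setD1 a ha).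
  rewrite /mass big_set1 in h1.
  apply: le_trans (mass_sub (~: A) _ _).
  + rewrite massC; lra.
  + by rewrite /cl finset.subsetUl.
Qed.

Lemma coarea (A B : {set V}) : (2 <= setdist P A B)%N -> 8^-1 <= mass m A ->
  8^-1 <= mass m (cl P B) ->
  (cheeger P m <= (8 * (degmax P / ((setdist P A B).-1)%:R))%:E)%E.
Proof.
move=> hD hA hB.
set n := (setdist P A B).-1.
have hn : (0 < n)%N by rewrite /n; lia.
pose W (r : nat) := [set x | (fd A x <= r)%N].
have hW : forall r, (r < n)%N -> (8^-1 <= mass m (W r)) && (mass m (W r) <= 1 - 8^-1).
  move=> r hr; apply/andP; split.
  - apply: le_trans hA (mass_sub _ _ _); apply/fintype.subsetP => x hx; by rewrite inE fd_in.
  - have hsub : W r \subset ~: cl P B.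
      apply/fintype.subsetP => x; rewrite inE finset.in_setC => hx; apply/negP => hcl.
      have := cl_fd A B x hcl; rewrite /n in hr; lia.
    have := mass_sub _ _ hsub; rewrite massC; lra.
pose g x := m x * deg x.
have hg0 : forall x, 0 <= g x by move=> x; apply: mulr_ge0 => //; apply: sumr_ge0 => y _.
have hstep : forall r, bnd P m (W r) <= \sum_x (if fd A x == r then g x else 0).
  move=> r; rewrite bndE big_mkcond /=; apply: ler_sum => x _.
  case: ifP => hx; last by case: ifP.
  case: (eqVneq (fd A x) r) => hfx.
  + rewrite /g /deg mulr_sumr.
    rewrite [X in X <= _]big_mkcond [X in _ <= X]big_mkcond; apply: ler_sum => y _.
    case: ifP => hy; case: ifP => hyx //.
    * move/negbFE/eqP: hyx => hyx; move: hy; by rewrite hyx inE hx.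
    * by apply: mulr_ge0.
  + rewrite big1 // => y hy.
    have -> : P x y = 0; last by rewrite mulr0.
    apply/eqP; rewrite eq_le HP0 andbT leNgt; apply/negP => hp.
    have hxy : x != y by apply: contraTneq hy => <-; rewrite inE hx.
    have := fd_step A x y (introT andP (conj hxy hp)); move: hx hy hfx; rewrite !inE => hx hy hfx.
    lia.
have hsum : \sum_(r < n) bnd P m (W r) <= degmax P.
  apply: (@le_trans _ _ (\sum_(r < n) \sum_x (if fd A x == r then g x else 0))).
    by apply: ler_sum => r _; apply: hstep.
  rewrite exchange_big /=.
  apply: (@le_trans _ _ (\sum_x g x)).
    apply: ler_sum => x _.
    case: (ltnP (fd A x) n) => hx.
    - rewrite (bigD1 (Ordinal hx)) //= eqxx big1 ?addr0 // => r hr.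
      case: eqP => // he; move: hr; by rewrite -val_eqE /= he eqxx.
    - rewrite big1 // => r _; case: eqP => // he.
      by have := ltn_ord r; rewrite -he; lia.
  apply: (@le_trans _ _ (\sum_x m x * degmax P)).
    by apply: ler_sum => x _; apply: ler_wpM2l => //; apply: deg_le.
  by rewrite -mulr_suml Hm1 mul1r.
have [r hr] : exists r : 'I_n, bnd P m (W r) <= degmax P / n%:R.
  apply/existsP; apply: contraT; rewrite negb_exists => /forallP hall.
  have : \sum_(r < n) (degmax P / n%:R) < \sum_(r < n) bnd P m (W r).
    apply: ltr_sum; first by apply/hasP; exists (Ordinal hn) => //; rewrite mem_index_enum.
    by move=> i _; rewrite ltNge; exact: hall i.
  rewrite sumr_const card_ord -(mulr_natr (degmax P / n%:R) n) divfK ?pnatr_eq0 -?lt0n // => h.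
  by have := hsum; lra.
have /andP [h1 h2] := hW r (ltn_ord r).
apply: le_trans (cheeger_le8 _ h1 h2) _.
by rewrite lee_fin ler_pM2l.
Qed.

Lemma diam_attained : exists A B, [/\ 8^-1 <= mass m A, 8^-1 <= mass m (cl P B)
  & diam_obs P m 8^-1 = setdist P A B].
Proof.
have hT : (8^-1 <= mass m (finset.setT : {set V})) && (8^-1 <= mass m (cl P finset.setT)).
  by rewrite clT massT; apply/andP; split; lra.
rewrite /diam_obs (bigop.bigmax_eq_arg (finset.setT, finset.setT)); last exact: hT.
case: arg_maxnP; first exact: hT.
by move=> [A B] /= /andP [h1 h2] _; exists A, B.
Qed.

Lemma arith (dm : R) (k : nat) : 0 <= dm -> (1 <= k)%N ->
  8 * (dm / k%:R) <= 57 * dm / k.+1%:R.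
Proof.
move=> hdm hk.
have hk0 : 0 < k%:R :> R by rewrite ltr0n.
have hk1 : 1 <= k%:R :> R by rewrite ler1n.
set t := dm / k%:R.
have ht : 0 <= t by apply: divr_ge0.
have -> : dm = t * k%:R by rewrite /t divfK // lt0r_neq0.
rewrite -addn1 natrD ler_pdivlMr; last by lra.
nra.
Qed.

Lemma main_sec : (cheeger P m <= ((57 * degmax P) / (diam_obs P m (8^-1))%:R)%:E)%E.
Proof.
have hD1 := diam_ge1.
have hdm := degmax_ge0.
case: (leqP (diam_obs P m 8^-1) 1) => hD.
- have -> : diam_obs P m 8^-1 = 1%N by apply/eqP; rewrite eqn_leq hD hD1.
  apply: le_trans cheeger_deg _; rewrite lee_fin mulr1n divr1; lra.
- have [A [B [h1 h2 he]]] := diam_attained.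
  rewrite he in hD *.
  apply: le_trans (coarea A B hD h1 h2) _.
  rewrite lee_fin.
  move: hD; case: (setdist P A B) => [|k] // hk /=.
  by apply: arith => //; lia.
Qed.

End Proofs.

Theorem theorem6p4 (R : realType) (V : finType) (P : V -> V -> R) (m : V -> R)
  (HV : (1 < #|V|)%N)
  (HP0 : forall x y, 0 <= P x y)
  (Hsupp : forall x y, (0 < P x y) = (0 < P y x))
  (Hconn : forall x y, connect (adj P) x y)
  (Hm0 : forall x, 0 <= m x)
  (Hm1 : \sum_x m x = 1)
  (Hrev : forall x y, m x * P x y = m y * P y x) :
  (cheeger P m <= ((57 * degmax P) / (diam_obs P m (8^-1))%:R)%:E)%E.
Proof. by apply: main_sec. Qed.
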